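(* For all $x\ge \tfrac{11}{2}$, $|w_0(x)|\le \tfrac{15}{2}x^{-10}$ (i.e. $\sup_{x\ge 11/2}x^{10}|w_0(x)|\le \tfrac{15}{2}$) and $|w_0'(x)|\le 8.85\,x^{-39/4}$.
   Context: Let $b=\tfrac45(24)^{1/4}$, $a=\tfrac52b$, $N_0(x)=-\tfrac{4412401}{98304\sqrt6}x^{-19/2}\bigl[1-\tfrac{1225}{90049\sqrt6}x^{-5/2}+\tfrac{30625}{2161176}x^{-5}\bigr]$, $\mathcal G_1(x)=x^{-5/8}e^{-ibx^{5/4}}$, $\mathcal G_2(x)=x^{-5/8}e^{ibx^{5/4}}$, and for $x>0$, $w_0(x)=\sum_{j=1}^2\frac{(-1)^j}{ia}\mathcal G_j(x)\int_\infty^x\mathcal G_{3-j}(t)\,t\,N_0(t)\,dt$. *)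

(* Defs.v *)
From Stdlib Require Import Reals.
From Coquelicot Require Import Coquelicot.
Open Scope R_scope.

Definition b_const : R := 4/5 * Rpower 24 (1/4).
Definition a_const : R := 5/2 * b_const.

Definition N0 (x : R) : R :=
  - (4412401 / (98304 * sqrt 6)) * Rpower x (-19/2)
    * (1 - 1225 / (90049 * sqrt 6) * Rpower x (-5/2)
         + 30625 / 2161176 * Rpower x (-5)).

Definition cexpi (theta : R) : C := (cos theta, sin theta).

Definition G1 (x : R) : C := (RtoC (Rpower x (-5/8)) * cexpi (- (b_const * Rpower x (5/4))))%C.
Definition G2 (x : R) : C := (RtoC (Rpower x (-5/8)) * cexpi (b_const * Rpower x (5/4)))%C.

Definition int_from_infty (f : R -> C) (x : R) : C :=
  @RInt_gen C_R_CompleteNormedModule f (Rbar_locally p_infty) (at_point x).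

Definition w0 (x : R) : C := (
  (RtoC ((-1) ^ 1) / (Ci * RtoC a_const)) * G1 x
     * int_from_infty (fun t => (G2 t * RtoC (t * N0 t))%C) x
  + (RtoC ((-1) ^ 2) / (Ci * RtoC a_const)) * G2 x
     * int_from_infty (fun t => (G1 t * RtoC (t * N0 t))%C) x)%C.

(* Main.v *)
Require Import Defs.
From Stdlib Require Import Reals Lra.
From Coquelicot Require Import Coquelicot.
Open Scope R_scope.

Lemma is_derive_pairC (f g : R -> R) x df dg :
  is_derive f x df -> is_derive g x dg ->
  is_derive (V := C_R_NormedModule) (fun t => (f t, g t) : C) x (df, dg).
Proof.
  intros Hf Hg. unfold is_derive in *.
  eapply filterdiff_ext_lin.
  - apply (filterdiff_comp_2 (K:=R_AbsRing) (T:=R_NormedModule) (U:=R_NormedModule) (V:=R_NormedModule) (W:=C_R_NormedModule) f g (fun u v => (u,v)) _ _ (fun u v => (u,v)) Hf Hg).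
    apply filterdiff_linear.
    apply is_linear_ext with (fun x => x). { intros [u v]; reflexivity. }
    apply is_linear_id.
  - intros y. reflexivity.
Qed.

Lemma is_derive_fstC (f : R -> C) x l :
  is_derive (V := C_R_NormedModule) f x l -> is_derive (fun t => fst (f t)) x (fst l).
Proof.
  intros H. unfold is_derive in *.
  eapply filterdiff_ext_lin.
  - apply (filterdiff_comp f (fun t : C_R_NormedModule => fst t) _ (fun t : C_R_NormedModule => fst t) H).
    apply filterdiff_linear. apply (is_linear_fst (K:=R_AbsRing) (U:=R_NormedModule) (V:=R_NormedModule)).
  - intros y. reflexivity.
Qed.

Lemma is_derive_sndC (f : R -> C) x l :
  is_derive (V := C_R_NormedModule) f x l -> is_derive (fun t => snd (f t)) x (snd l).
Proof.
  intros H. unfold is_derive in *.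
  eapply filterdiff_ext_lin.
  - apply (filterdiff_comp f (fun t : C_R_NormedModule => snd t) _ (fun t : C_R_NormedModule => snd t) H).
    apply filterdiff_linear. apply (is_linear_snd (K:=R_AbsRing) (U:=R_NormedModule) (V:=R_NormedModule)).
  - intros y. reflexivity.
Qed.

Lemma is_derive_Cmult (f g : R -> C) x df dg :
  is_derive (V := C_R_NormedModule) f x df -> is_derive (V := C_R_NormedModule) g x dg ->
  is_derive (V := C_R_NormedModule) (fun t => (f t * g t)%C) x (df * g x + f x * dg)%C.
Proof.
  intros Hf Hg.
  apply is_derive_fstC in Hf as Hf1. apply is_derive_sndC in Hf as Hf2.
  apply is_derive_fstC in Hg as Hg1. apply is_derive_sndC in Hg as Hg2.
  eapply is_derive_ext.
  { intros t. symmetry. reflexivity. }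
  unfold Cmult at 1.
  match goal with |- is_derive ?F _ _ => change F with (fun t => ((fst (f t) * fst (g t) - snd (f t) * snd (g t)), (fst (f t) * snd (g t) + snd (f t) * fst (g t))) : C) end.
  replace (df * g x + f x * dg)%C with
    ((fst df * fst (g x) + fst (f x) * fst dg - (snd df * snd (g x) + snd (f x) * snd dg)),
     (fst df * snd (g x) + fst (f x) * snd dg + (snd df * fst (g x) + snd (f x) * fst dg))).
  2:{ destruct df, dg, (f x), (g x); unfold Cplus, Cmult; simpl; f_equal; ring. }
  apply is_derive_pairC.
  - apply (is_derive_minus (fun t => fst (f t) * fst (g t)) (fun t => snd (f t) * snd (g t))).
    + apply (is_derive_mult (fun t => fst (f t)) (fun t => fst (g t))); auto. intros; apply Rmult_comm.
    + apply (is_derive_mult (fun t => snd (f t)) (fun t => snd (g t))); auto. intros; apply Rmult_comm.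
  - apply (is_derive_plus (fun t => fst (f t) * snd (g t)) (fun t => snd (f t) * fst (g t))).
    + apply (is_derive_mult (fun t => fst (f t)) (fun t => snd (g t))); auto. intros; apply Rmult_comm.
    + apply (is_derive_mult (fun t => snd (f t)) (fun t => fst (g t))); auto. intros; apply Rmult_comm.
Qed.


Lemma Gen (k A r : R -> C) (m M : R -> R) (x c : R) :
  0 < x -> 0 < c ->
  (forall t, x <= t -> is_derive (V:=C_R_NormedModule) A t (k t + r t)%C) ->
  (forall t, x <= t -> @continuous R_UniformSpace C_R_NormedModule k t) ->
  (forall t, x <= t -> @continuous R_UniformSpace C_R_NormedModule r t) ->
  (forall t, x <= t -> Cmod (r t) <= m t) ->
  (forall t, x <= t -> is_derive M t (- m t)) ->
  (forall t, x <= t -> continuous m t) ->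
  (forall t, x <= t -> 0 <= M t <= c / t) ->
  (forall t, x <= t -> Cmod (A t) <= c / t) ->
  exists R1, is_RInt_gen (V:=C_R_NormedModule) k (Rbar_locally p_infty) (at_point x) (A x - R1)%C
     /\ Cmod R1 <= M x.
Proof.
  intros Hx Hc HA Hk Hr Hrm HM Hm HMb HAb.
  set (Kf := fun u => RInt (V:=C_R_CompleteNormedModule) r x u).
  assert (Hex : forall u v, x <= u -> x <= v -> ex_RInt (V:=C_R_CompleteNormedModule) r u v).
  { intros u v Hu Hv. apply ex_RInt_continuous. intros z Hz. apply Hr.
    destruct Hz as [Hz _]. eapply Rle_trans; [|apply Hz]. apply Rmin_glb; auto. }
  assert (HMi : forall u v, x <= u -> u <= v -> is_RInt m u v (M u - M v)).
  { intros u v Hu Huv.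
    assert (H := is_RInt_derive (V:=R_CompleteNormedModule) (fun t => - M t) m u v).
    replace (M u - M v) with (minus (- M v) (- M u)).
    2:{ unfold minus, plus, opp; simpl. ring. }
    apply H.
    - intros z Hz. rewrite Rmin_left in Hz by lra.
      replace (m z) with (opp (- m z)) by (unfold opp; simpl; ring).
      apply (is_derive_ext (fun t => opp (M t))). { intros; reflexivity. }
      apply (is_derive_opp (K:=R_AbsRing) (V:=R_NormedModule) M z (- m z)). apply HM. lra.
    - intros z Hz. rewrite Rmin_left in Hz by lra. apply Hm. lra. }
  assert (HK : forall u v, x <= u -> u <= v -> Cmod (Kf v - Kf u)%C <= M u - M v).
  { intros u v Hu Huv.
    assert (E : (Kf v - Kf u)%C = RInt (V:=C_R_CompleteNormedModule) r u v).
    { unfold Kf. rewrite <- (@RInt_Chasles C_R_CompleteNormedModule r x u v).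
      2: apply Hex; lra. 2: apply Hex; lra.
      set (I1 := @RInt C_R_CompleteNormedModule r x u). set (I2 := @RInt C_R_CompleteNormedModule r u v).
      change (plus I1 I2) with (I1 + I2)%C. ring. }
    rewrite E, Cmod_norm.
    apply (@norm_RInt_le C_R_CompleteNormedModule r m u v _ _ Huv).
    - intros z Hz. rewrite <- Cmod_norm. apply Hrm. lra.
    - apply RInt_correct. apply Hex; lra.
    - apply HMi; lra. }
  assert (HK0 : forall u, x <= u -> Cmod (Kf u) <= M x - M u).
  { intros u Hu. replace (Kf u) with (Kf u - Kf x)%C. apply HK; lra.
    unfold Kf. rewrite (@RInt_point C_R_CompleteNormedModule). change (zero : C_R_CompleteNormedModule) with (RtoC 0). ring. }
  set (F := filtermap Kf (Rbar_locally p_infty)).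
  assert (HPF : ProperFilter F).
  { apply filtermap_proper_filter. apply Rbar_locally_filter. }
  assert (Hcau : cauchy F).
  { intros eps. set (N := Rmax x (c / eps + 1)).
    assert (HN1 : x <= N) by apply Rmax_l.
    assert (HN2 : c / eps + 1 <= N) by apply Rmax_r.
    assert (HNp : 0 < N) by lra.
    exists (Kf N). unfold F, filtermap. simpl. exists N. intros u Hu.
    apply (@norm_compat1 R_AbsRing C_R_CompleteNormedModule). rewrite <- Cmod_norm.
    eapply Rle_lt_trans. apply HK; lra.
    destruct (HMb u) as [Hu0 _]; [lra|]. destruct (HMb N) as [_ HN]; [lra|].
    assert (c / N < eps).
    { apply Rmult_lt_reg_r with N; auto. unfold Rdiv. rewrite Rmult_assoc, Rinv_l by lra.
      assert (Heps := cond_pos eps).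
      assert (c < eps * (c / eps + 1)).
      { unfold Rdiv. rewrite Rmult_plus_distr_l, <- Rmult_assoc, (Rmult_comm eps c), Rmult_assoc, Rinv_r by lra. lra. }
      nra. }
    lra. }
  set (L := lim F).
  assert (HL : forall eps, 0 < eps -> exists N, forall u, N < u -> Cmod (Kf u - L)%C < eps).
  { intros eps Heps.
    assert (Hnf := @norm_factor_gt_0 R_AbsRing C_R_NormedModule).
    assert (Hep : 0 < eps / norm_factor (V:=C_R_NormedModule)).
    { apply Rdiv_lt_0_compat; auto. }
    destruct (complete_cauchy F HPF Hcau (mkposreal _ Hep)) as [N HN].
    exists N. intros u Hu. specialize (HN u Hu).
    apply (@norm_compat2 R_AbsRing C_R_CompleteNormedModule) in HN. rewrite Cmod_norm.
    simpl in HN. unfold Rdiv in HN. rewrite (Rmult_comm eps), <- Rmult_assoc, Rinv_r, Rmult_1_l in HN by lra.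
    exact HN. }
  exists (- L)%C. split.
  2:{ rewrite Cmod_opp. apply Rle_plus_epsilon. intros eps Heps.
      destruct (HL eps Heps) as [N HN].
      set (u := Rmax N x + 1).
      assert (Hu1 : N < u). { unfold u. generalize (Rmax_l N x); lra. }
      assert (Hu2 : x <= u). { unfold u. generalize (Rmax_r N x); lra. }
      specialize (HN u Hu1). specialize (HK0 u Hu2).
      destruct (HMb u Hu2) as [HMu _].
      replace L with (Kf u - (Kf u - L))%C by ring.
      eapply Rle_trans. apply Cmod_triangle. rewrite Cmod_opp. lra. }
  unfold is_RInt_gen, filterlimi, filter_le, filtermapi.
  intros P [eps HP].
  assert (Heps := cond_pos eps).
  destruct (HL (eps / 2)) as [N1 HN1]. lra.
  set (N2 := 2 * c / eps + 1).
  apply Filter_prod with (fun a => Rmax (Rmax N1 N2) x < a) (fun b => b = x).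
  - exists (Rmax (Rmax N1 N2) x). auto.
  - reflexivity.
  - intros a b Ha Hb. simpl. subst b.
    assert (Ha1 : N1 < a). { generalize (Rmax_l N1 N2) (Rmax_l (Rmax N1 N2) x); lra. }
    assert (Ha2 : N2 < a). { generalize (Rmax_r N1 N2) (Rmax_l (Rmax N1 N2) x); lra. }
    assert (Ha3 : x < a). { generalize (Rmax_r (Rmax N1 N2) x); lra. }
    exists (A x - A a + Kf a)%C. split.
    + assert (H1 : is_RInt (V:=C_R_NormedModule) (fun t => (k t + r t)%C) x a (minus (A a) (A x))).
      { apply (@is_RInt_derive C_R_CompleteNormedModule A (fun t => (k t + r t)%C)).
        - intros z Hz. rewrite Rmin_left in Hz by lra. apply HA. lra.
        - intros z Hz. rewrite Rmin_left in Hz by lra.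
          apply (@continuous_plus R_UniformSpace R_AbsRing C_R_NormedModule k r); [apply Hk|apply Hr]; lra. }
      assert (H2 : is_RInt (V:=C_R_NormedModule) r x a (Kf a)).
      { apply (@RInt_correct C_R_CompleteNormedModule). apply Hex; lra. }
      assert (H3 := @is_RInt_minus C_R_NormedModule _ _ x a _ _ H1 H2).
      replace (A x - A a + Kf a)%C with (opp (minus (minus (A a) (A x)) (Kf a)) : C_R_NormedModule).
      2:{ change (- ((A a - A x) - Kf a) = A x - A a + Kf a)%C. ring. }
      apply (@is_RInt_swap C_R_NormedModule).
      apply (@is_RInt_ext C_R_NormedModule) with (2 := H3).
      intros z _. change ((k z + r z) - r z = k z)%C. ring.
    + apply HP. apply norm_compat1. rewrite <- Cmod_norm.
      match goal with |- Cmod ?z < _ => replace z with (- A a + (Kf a - L))%C end.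
      2:{ change (- A a + (Kf a - L) = (A x - A a + Kf a) - (A x - - L))%C. ring. }
      eapply Rle_lt_trans. apply Cmod_triangle. rewrite Cmod_opp.
      specialize (HN1 a Ha1). specialize (HAb a (Rlt_le _ _ Ha3)).
      assert (c / a < eps / 2).
      { apply Rmult_lt_reg_r with a. lra. unfold Rdiv. rewrite Rmult_assoc, Rinv_l by lra.
        unfold N2 in Ha2.
        assert (Hq : 2 * c / eps < a) by lra.
        assert (Hq2 : c * 2 = (2 * c / eps) * eps) by (field; lra).
        assert (c * 2 < eps * a) by nra.
        lra. }
      lra.
Qed.

Definition s (t : R) : R := Rpower t (1/8).

Lemma s_pos t : 0 < s t.
Proof. unfold s, Rpower. apply exp_pos. Qed.

Lemma rp8 t z : 0 < t -> Rpower t (IZR z / 8) = powerRZ (s t) z.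
Proof.
  intros Ht. unfold s. rewrite powerRZ_Rpower by (apply exp_pos).
  rewrite Rpower_mult. f_equal. field.
Qed.

Lemma s_pow8 t : 0 < t -> s t ^ 8 = t.
Proof.
  intros Ht. replace (s t ^ 8) with (powerRZ (s t) 8) by reflexivity.
  rewrite <- rp8 by auto. replace (IZR 8 / 8) with 1 by field. apply Rpower_1; auto.
Qed.

Lemma is_derive_s t : 0 < t -> is_derive s t (/ 8 / s t ^ 7).
Proof.
  intros Ht. apply is_derive_Reals. unfold s.
  replace (/ 8 / Rpower t (1/8) ^ 7) with (1/8 * Rpower t (1/8 - 1)).
  apply derivable_pt_lim_power; auto.
  replace (1/8 - 1) with (IZR (-7) / 8) by (simpl; field).
  rewrite rp8 by auto. unfold s. simpl. field. generalize (s_pos t); unfold s; lra.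
Qed.

Lemma is_derive_cmp (u : R -> R) du t : 0 < t -> is_derive u (s t) du ->
  is_derive (fun t => u (s t)) t (du / (8 * s t ^ 7)).
Proof.
  intros Ht Hu. replace (du / (8 * s t ^ 7)) with (scal (/ 8 / s t ^ 7) du).
  apply (@is_derive_comp R_AbsRing R_NormedModule); auto. apply is_derive_s; auto.
  unfold scal; simpl; unfold mult; simpl. field. generalize (s_pos t); lra.
Qed.

Ltac nz := repeat match goal with
  | |- _ /\ _ => split
  | |- _ * _ <> 0 => apply Rmult_integral_contrapositive_currified
  | |- _ ^ _ <> 0 => apply pow_nonzero
  | |- True => exact I
  | |- _ <> 0 => (assumption || lra)
  end.

Definition Q0 : R := 4412401 / 1179648.
Definition c1 : R := 1225 / (90049 * sqrt 6).
Definition c2 : R := 30625 / 2161176.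
Definition K0 : R := 4412401 / (98304 * sqrt 6).

Definition Fs (x : R) : R := - (Q0 * a_const ^ 2 / 4) * (/ x ^ 73 - c1 / x ^ 93 + c2 / x ^ 113).
Definition gs (x : R) : R := - (Q0 * a_const / 2) * (/ x ^ 75 - c1 / x ^ 95 + c2 / x ^ 115).
Definition hs (x : R) : R := - Q0 * (- (75/8) / x ^ 85 + (95/8) * c1 / x ^ 105 - (115/8) * c2 / x ^ 125).
Definition hps (x : R) : R := - Q0 * ((75*85/64) / x ^ 93 - (95*105/64) * c1 / x ^ 113 + (115*125/64) * c2 / x ^ 133).
Definition ms (x : R) : R := Q0 * ((75*85/64) / x ^ 93 + (95*105/64) * c1 / x ^ 113 + (115*125/64) * c2 / x ^ 133).
Definition Ms (x : R) : R := Q0 * ((75/8) / x ^ 85 + (95/8) * c1 / x ^ 105 + (115/8) * c2 / x ^ 125).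

Lemma d_gs t : 0 < t -> is_derive (fun t => gs (s t)) t (hs (s t) * (a_const / 2 * s t ^ 2)).
Proof.
  intros Ht. assert (Hs := s_pos t).
  replace (hs (s t) * (a_const / 2 * s t ^ 2)) with
    ((- (Q0 * a_const / 2) * (-75 / s t ^ 76 + 95 * c1 / s t ^ 96 - 115 * c2 / s t ^ 116)) / (8 * s t ^ 7)).
  2:{ unfold hs. field. lra. }
  apply is_derive_cmp; auto. unfold gs. auto_derive. nz. field. lra.
Qed.

Lemma d_hs t : 0 < t -> is_derive (fun t => hs (s t)) t (hps (s t)).
Proof.
  intros Ht. assert (Hs := s_pos t).
  replace (hps (s t)) with
    ((- Q0 * ((75/8*85) / s t ^ 86 - (95/8*105) * c1 / s t ^ 106 + (115/8*125) * c2 / s t ^ 126)) / (8 * s t ^ 7)).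
  2:{ unfold hps. field. lra. }
  apply is_derive_cmp; auto. unfold hs. auto_derive. nz. field. lra.
Qed.

Lemma d_Ms t : 0 < t -> is_derive (fun t => Ms (s t)) t (- ms (s t)).
Proof.
  intros Ht. assert (Hs := s_pos t).
  replace (- ms (s t)) with
    ((- Q0 * ((75/8*85) / s t ^ 86 + (95/8*105) * c1 / s t ^ 106 + (115/8*125) * c2 / s t ^ 126)) / (8 * s t ^ 7)).
  2:{ unfold ms. field. lra. }
  apply is_derive_cmp; auto. unfold Ms. auto_derive. nz. field. lra.
Qed.

Lemma d_ph t : 0 < t -> is_derive (fun t => b_const * s t ^ 10) t (a_const / 2 * s t ^ 2).
Proof.
  intros Ht. assert (Hs := s_pos t).
  replace (a_const / 2 * s t ^ 2) with ((b_const * (10 * s t ^ 9)) / (8 * s t ^ 7)).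
  2:{ unfold a_const. field. lra. }
  apply (is_derive_cmp (fun x => b_const * x ^ 10)); auto. auto_derive. auto. ring.
Qed.

Lemma gs_Fs x : 0 < x -> gs x * (a_const / 2 * x ^ 2) = Fs x.
Proof. intros. unfold gs, Fs. field. lra. Qed.

Lemma P_eq t : 0 < t -> Rpower t (-5/8) = / s t ^ 5.
Proof. intros Ht. replace (-5/8) with (IZR (Zneg 5) / 8) by lra. rewrite rp8 by auto. reflexivity. Qed.

Lemma Ph_eq t : 0 < t -> Rpower t (5/4) = s t ^ 10.
Proof. intros Ht. replace (5/4) with (IZR (Zpos 10) / 8) by lra. rewrite rp8 by auto. reflexivity. Qed.

Lemma sqrt6_sq : sqrt 6 * sqrt 6 = 6.
Proof. apply sqrt_sqrt. lra. Qed.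

Lemma sqrt6_pos : 0 < sqrt 6.
Proof. apply sqrt_lt_R0. lra. Qed.

Lemma a_sq : a_const ^ 2 = 8 * sqrt 6.
Proof.
  unfold a_const, b_const.
  replace ((5/2 * (4/5 * Rpower 24 (1/4)))^2) with (4 * (Rpower 24 (1/4)) ^ 2) by field.
  rewrite <- Rpower_pow by (unfold Rpower; apply exp_pos).
  rewrite Rpower_mult. replace (1/4 * INR 2) with (/2) by (simpl; field).
  rewrite Rpower_sqrt by lra.
  replace 24 with (4 * 6) by lra. rewrite sqrt_mult by lra.
  replace 4 with (2 * 2) at 2 by lra. rewrite sqrt_square by lra. ring.
Qed.

Lemma a_pos : 0 < a_const.
Proof. unfold a_const, b_const, Rpower. generalize (exp_pos (1/4 * ln 24)). lra. Qed.

Lemma K0_eq : 4412401 / (98304 * sqrt 6) = Q0 * a_const ^ 2 / 4.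
Proof.
  rewrite a_sq. unfold Q0. assert (H6 := sqrt6_sq). assert (Hp := sqrt6_pos).
  apply Rmult_eq_reg_r with (sqrt 6); [| lra].
  replace (4412401 / (98304 * sqrt 6) * sqrt 6) with (4412401 / 98304) by (field; lra).
  replace (4412401 / 1179648 * (8 * sqrt 6) / 4 * sqrt 6) with (4412401 / 1179648 * 2 * (sqrt 6 * sqrt 6)) by field.
  rewrite H6. field.
Qed.

Lemma F_eq t : 0 < t -> / s t ^ 5 * (t * Defs.N0 t) = Fs (s t).
Proof.
  intros Ht. unfold Defs.N0.
  replace (-19/2) with (IZR (Zneg 76) / 8) by lra.
  replace (-5/2) with (IZR (Zneg 20) / 8) by lra.
  replace (-5) with (IZR (Zneg 40) / 8) by lra.
  rewrite !rp8 by auto. rewrite K0_eq.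
  assert (Hs := s_pos t). assert (H8 := s_pow8 t Ht).
  set (σ := s t) in *. rewrite <- H8. unfold Fs. unfold c1.
  change (powerRZ σ (Zneg 76)) with (/ σ ^ 76).
  change (powerRZ σ (Zneg 20)) with (/ σ ^ 20).
  change (powerRZ σ (Zneg 40)) with (/ σ ^ 40).
  clearbody σ. unfold c2. field. split. lra. generalize sqrt6_pos; lra.
Qed.

Definition Th (t : R) : R := b_const * s t ^ 10.

Lemma G1_eq t : 0 < t -> G1 t = ((/ s t ^ 5) * cos (Th t) + 0 * sin (Th t), 0 * cos (Th t) + (- / s t ^ 5) * sin (Th t)).
Proof.
  intros Ht. unfold G1, cexpi, Th. rewrite P_eq, Ph_eq by auto. rewrite cos_neg, sin_neg.
  unfold Cmult, RtoC; simpl. f_equal; ring.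
Qed.

Lemma G2_eq t : 0 < t -> G2 t = ((/ s t ^ 5) * cos (Th t) + 0 * sin (Th t), 0 * cos (Th t) + (/ s t ^ 5) * sin (Th t)).
Proof.
  intros Ht. unfold G2, cexpi, Th. rewrite P_eq, Ph_eq by auto.
  unfold Cmult, RtoC; simpl. f_equal; ring.
Qed.

Lemma d_cs (f g θ : R -> R) t df dg dθ :
  is_derive f t df -> is_derive g t dg -> is_derive θ t dθ ->
  is_derive (fun t => f t * cos (θ t) + g t * sin (θ t)) t
    ((df + g t * dθ) * cos (θ t) + (dg - f t * dθ) * sin (θ t)).
Proof.
  intros Hf Hg Hθ.
  assert (Hc : is_derive (fun t => cos (θ t)) t (dθ * - sin (θ t))).
  { apply (@is_derive_comp R_AbsRing R_NormedModule cos θ t (- sin (θ t)) dθ); auto. apply is_derive_cos. }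
  assert (Hsn : is_derive (fun t => sin (θ t)) t (dθ * cos (θ t))).
  { apply (@is_derive_comp R_AbsRing R_NormedModule sin θ t (cos (θ t)) dθ); auto. apply is_derive_sin. }
  eapply is_derive_ext. intros; reflexivity.
  replace ((df + g t * dθ) * cos (θ t) + (dg - f t * dθ) * sin (θ t)) with
    (plus (plus (mult df (cos (θ t))) (mult (f t) (dθ * - sin (θ t))))
          (plus (mult dg (sin (θ t))) (mult (g t) (dθ * cos (θ t))))).
  2:{ unfold plus, mult; simpl. ring. }
  apply (is_derive_plus (K:=R_AbsRing) (V:=R_NormedModule) (fun t => f t * cos (θ t)) (fun t => g t * sin (θ t))).
  - apply (is_derive_mult f (fun t => cos (θ t))); auto. intros; apply Rmult_comm.
  - apply (is_derive_mult g (fun t => sin (θ t))); auto. intros; apply Rmult_comm.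
Qed.

Lemma d_ms t : 0 < t -> is_derive (fun t => - hs (s t)) t (- hps (s t)).
Proof.
  intros Ht. apply (is_derive_ext (fun t => opp (hs (s t)))). intros; reflexivity.
  apply (is_derive_opp (K:=R_AbsRing) (V:=R_NormedModule)). apply d_hs; auto.
Qed.

Lemma d_mg t : 0 < t -> is_derive (fun t => - gs (s t)) t (- (hs (s t) * (a_const / 2 * s t ^ 2))).
Proof.
  intros Ht. apply (is_derive_ext (fun t => opp (gs (s t)))). intros; reflexivity.
  apply (is_derive_opp (K:=R_AbsRing) (V:=R_NormedModule)). apply d_gs; auto.
Qed.

Definition A1 (t : R) : C := (hs (s t) * cos (Th t) + gs (s t) * sin (Th t), gs (s t) * cos (Th t) + (- hs (s t)) * sin (Th t)).
Definition r1 (t : R) : C := (hps (s t) * cos (Th t), - (hps (s t) * sin (Th t))).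
Definition A2 (t : R) : C := (hs (s t) * cos (Th t) + gs (s t) * sin (Th t), (- gs (s t)) * cos (Th t) + hs (s t) * sin (Th t)).
Definition r2 (t : R) : C := (hps (s t) * cos (Th t), hps (s t) * sin (Th t)).
Definition k1 (t : R) : C := (G1 t * RtoC (t * Defs.N0 t))%C.
Definition k2 (t : R) : C := (G2 t * RtoC (t * Defs.N0 t))%C.

Lemma k1_eq t : 0 < t -> k1 t = (Fs (s t) * cos (Th t), - (Fs (s t) * sin (Th t))).
Proof.
  intros Ht. unfold k1. rewrite G1_eq by auto. rewrite <- (F_eq t Ht).
  unfold Cmult, RtoC; simpl. f_equal; ring.
Qed.

Lemma k2_eq t : 0 < t -> k2 t = (Fs (s t) * cos (Th t), Fs (s t) * sin (Th t)).
Proof.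
  intros Ht. unfold k2. rewrite G2_eq by auto. rewrite <- (F_eq t Ht).
  unfold Cmult, RtoC; simpl. f_equal; ring.
Qed.

Lemma dA1 t : 0 < t -> is_derive (V:=C_R_NormedModule) A1 t (k1 t + r1 t)%C.
Proof.
  intros Ht. assert (Hs := s_pos t).
  set (dθ := a_const / 2 * s t ^ 2).
  replace (k1 t + r1 t)%C with
    (((hps (s t) + gs (s t) * dθ) * cos (Th t) + (hs (s t) * dθ - hs (s t) * dθ) * sin (Th t)),
     ((hs (s t) * dθ + - hs (s t) * dθ) * cos (Th t) + (- hps (s t) - gs (s t) * dθ) * sin (Th t))).
  2:{ rewrite k1_eq by auto. unfold r1, Cplus; simpl. unfold dθ. rewrite <- (gs_Fs (s t)) by auto. f_equal; ring. }
  apply is_derive_pairC.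
  - apply (d_cs (fun t => hs (s t)) (fun t => gs (s t)) Th); [apply d_hs|apply d_gs|apply d_ph]; auto.
  - apply (d_cs (fun t => gs (s t)) (fun t => - hs (s t)) Th); [apply d_gs|apply d_ms|apply d_ph]; auto.
Qed.

Lemma dA2 t : 0 < t -> is_derive (V:=C_R_NormedModule) A2 t (k2 t + r2 t)%C.
Proof.
  intros Ht. assert (Hs := s_pos t).
  set (dθ := a_const / 2 * s t ^ 2).
  replace (k2 t + r2 t)%C with
    (((hps (s t) + gs (s t) * dθ) * cos (Th t) + (hs (s t) * dθ - hs (s t) * dθ) * sin (Th t)),
     ((- (hs (s t) * dθ) + hs (s t) * dθ) * cos (Th t) + (hps (s t) - - gs (s t) * dθ) * sin (Th t))).
  2:{ rewrite k2_eq by auto. unfold r2, Cplus; simpl. unfold dθ. rewrite <- (gs_Fs (s t)) by auto. f_equal; ring. }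
  apply is_derive_pairC.
  - apply (d_cs (fun t => hs (s t)) (fun t => gs (s t)) Th); [apply d_hs|apply d_gs|apply d_ph]; auto.
  - apply (d_cs (fun t => - gs (s t)) (fun t => hs (s t)) Th); [apply d_mg|apply d_hs|apply d_ph]; auto.
Qed.

Lemma loc_pos t : 0 < t -> locally t (fun y => 0 < y).
Proof.
  intros Ht. assert (H2 : 0 < t / 2) by lra. exists (mkposreal _ H2). intros y Hy.
  change (Rabs (y - t) < t / 2) in Hy. apply Rabs_def2 in Hy. lra.
Qed.

Lemma cont_pair (u v : R -> R) t : ex_derive u t -> ex_derive v t ->
  @continuous R_UniformSpace C_R_NormedModule (fun t => (u t, v t) : C) t.
Proof.
  intros [du Hu] [dv Hv]. apply (@ex_derive_continuous R_AbsRing C_R_NormedModule).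
  exists (du, dv). apply is_derive_pairC; auto.
Qed.

Lemma ex_cmp (U : R -> R) t : 0 < t -> ex_derive U (s t) -> ex_derive (fun t => U (s t)) t.
Proof. intros Ht [d Hd]. eexists. apply is_derive_cmp; eauto. Qed.

Lemma cont_k1 t : 0 < t -> @continuous R_UniformSpace C_R_NormedModule k1 t.
Proof.
  intros Ht. apply (continuous_ext_loc _ (fun t => (Fs (s t) * cos (Th t), - (Fs (s t) * sin (Th t))) : C)).
  { generalize (loc_pos t Ht). apply filter_imp. intros y Hy. symmetry. apply k1_eq; auto. }
  assert (Hs := s_pos t).
  apply cont_pair.
  - apply (ex_cmp (fun x => Fs x * cos (b_const * x ^ 10))); auto. unfold Fs. auto_derive. nz.
  - apply (ex_cmp (fun x => - (Fs x * sin (b_const * x ^ 10)))); auto. unfold Fs. auto_derive. nz.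
Qed.

Lemma cont_k2 t : 0 < t -> @continuous R_UniformSpace C_R_NormedModule k2 t.
Proof.
  intros Ht. apply (continuous_ext_loc _ (fun t => (Fs (s t) * cos (Th t), Fs (s t) * sin (Th t)) : C)).
  { generalize (loc_pos t Ht). apply filter_imp. intros y Hy. symmetry. apply k2_eq; auto. }
  assert (Hs := s_pos t).
  apply cont_pair.
  - apply (ex_cmp (fun x => Fs x * cos (b_const * x ^ 10))); auto. unfold Fs. auto_derive. nz.
  - apply (ex_cmp (fun x => Fs x * sin (b_const * x ^ 10))); auto. unfold Fs. auto_derive. nz.
Qed.

Lemma cont_r1 t : 0 < t -> @continuous R_UniformSpace C_R_NormedModule r1 t.
Proof.
  intros Ht. assert (Hs := s_pos t). unfold r1. apply cont_pair.
  - apply (ex_cmp (fun x => hps x * cos (b_const * x ^ 10))); auto. unfold hps. auto_derive. nz.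
  - apply (ex_cmp (fun x => - (hps x * sin (b_const * x ^ 10)))); auto. unfold hps. auto_derive. nz.
Qed.

Lemma cont_r2 t : 0 < t -> @continuous R_UniformSpace C_R_NormedModule r2 t.
Proof.
  intros Ht. assert (Hs := s_pos t). unfold r2. apply cont_pair.
  - apply (ex_cmp (fun x => hps x * cos (b_const * x ^ 10))); auto. unfold hps. auto_derive. nz.
  - apply (ex_cmp (fun x => hps x * sin (b_const * x ^ 10))); auto. unfold hps. auto_derive. nz.
Qed.

Lemma cont_ms t : 0 < t -> continuous (fun t => ms (s t)) t.
Proof.
  intros Ht. assert (Hs := s_pos t). apply (@ex_derive_continuous R_AbsRing R_NormedModule).
  apply (ex_cmp ms); auto. unfold ms. auto_derive. nz.
Qed.

Lemma s_ge1 t : 1 <= t -> 1 <= s t.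
Proof.
  intros Ht. unfold s. replace 1 with (Rpower 1 (1/8)) at 1.
  apply Rle_Rpower_l; lra.
  unfold Rpower. rewrite ln_1, Rmult_0_r, exp_0. reflexivity.
Qed.

Lemma Xle σ n : 1 <= σ -> (8 <= n)%nat -> / σ ^ n <= / σ ^ 8.
Proof.
  intros Hs Hn. apply Rinv_le_contravar. apply pow_lt; lra. apply Rle_pow; auto.
Qed.

Lemma Xpos σ n : 0 < σ -> 0 < / σ ^ n.
Proof. intros. apply Rinv_0_lt_compat. apply pow_lt. auto. Qed.

Lemma c1_bnd : 0 < c1 < 1/100.
Proof.
  unfold c1. assert (H := sqrt6_pos). assert (H2 : 2 <= sqrt 6).
  { rewrite <- sqrt_square with 2 by lra. apply sqrt_le_1_alt. lra. }
  split. apply Rdiv_lt_0_compat; nra.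
  apply Rmult_lt_reg_r with (90049 * sqrt 6). nra. unfold Rdiv. rewrite Rmult_assoc, Rinv_l by nra. nra.
Qed.

Lemma c2_bnd : 0 < c2 < 1/50.
Proof. unfold c2. lra. Qed.

Lemma Q0_pos : 0 < Q0.
Proof. unfold Q0. lra. Qed.

Lemma Cmod_rot1 h θ : Cmod (h * cos θ, - (h * sin θ)) = Rabs h.
Proof.
  unfold Cmod; cbn [fst snd]. replace ((h * cos θ) ^ 2 + (- (h * sin θ)) ^ 2) with (h ^ 2 * (sin θ ^ 2 + cos θ ^ 2)) by ring.
  replace (sin θ ^ 2 + cos θ ^ 2) with 1. rewrite Rmult_1_r. rewrite <- Rsqr_pow2. apply sqrt_Rsqr_abs.
  generalize (sin2_cos2 θ). unfold Rsqr. intros H. rewrite <- H. ring.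
Qed.

Lemma Cmod_rot2 h θ : Cmod (h * cos θ, h * sin θ) = Rabs h.
Proof.
  unfold Cmod; cbn [fst snd]. replace ((h * cos θ) ^ 2 + (h * sin θ) ^ 2) with (h ^ 2 * (sin θ ^ 2 + cos θ ^ 2)) by ring.
  replace (sin θ ^ 2 + cos θ ^ 2) with 1. rewrite Rmult_1_r. rewrite <- Rsqr_pow2. apply sqrt_Rsqr_abs.
  generalize (sin2_cos2 θ). unfold Rsqr. intros H. rewrite <- H. ring.
Qed.

Lemma Cmod_le_abs (p q : R) : Cmod (p, q) <= Rabs p + Rabs q.
Proof.
  replace (p, q) with (RtoC p + Ci * RtoC q)%C.
  2:{ unfold Cplus, Cmult, RtoC, Ci; simpl. f_equal; ring. }
  eapply Rle_trans. apply Cmod_triangle. rewrite Cmod_mult, Cmod_Ci, !Cmod_R. lra.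
Qed.

Definition cb : R := 3 * Q0 * (a_const + 40).

Lemma cos_abs θ : Rabs (cos θ) <= 1.
Proof. apply Rabs_le. apply COS_bound. Qed.
Lemma sin_abs θ : Rabs (sin θ) <= 1.
Proof. apply Rabs_le. apply SIN_bound. Qed.

Lemma Xfacts σ n : 1 <= σ -> (8 <= n)%nat -> 0 < / σ ^ n <= / σ ^ 8.
Proof. intros. split. apply Xpos; lra. apply Xle; auto. Qed.

Lemma gs_bnd σ : 1 <= σ -> Rabs (gs σ) <= 3/2 * Q0 * a_const * / σ ^ 8.
Proof.
  intros Hs. unfold gs.
  destruct (Xfacts σ 75) as [H1 H1']; auto. repeat constructor.
  destruct (Xfacts σ 95) as [H2 H2']; auto. repeat constructor.
  destruct (Xfacts σ 115) as [H3 H3']; auto. repeat constructor.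
  assert (Hc1 := c1_bnd). assert (Hc2 := c2_bnd). assert (Ha := a_pos). assert (HQ := Q0_pos).
  unfold Rdiv. rewrite Rabs_mult, Rabs_Ropp, (Rabs_pos_eq (Q0 * a_const * / 2)) by nra.
  assert (HE : Rabs (/ σ ^ 75 - c1 * / σ ^ 95 + c2 * / σ ^ 115) <= 3 * / σ ^ 8).
  { apply Rabs_le. split; nra. }
  assert (0 < Q0 * a_const) by nra. nra.
Qed.

Lemma hs_bnd σ : 1 <= σ -> Rabs (hs σ) <= 36 * Q0 * / σ ^ 8.
Proof.
  intros Hs. unfold hs.
  destruct (Xfacts σ 85) as [H1 H1']; auto. repeat constructor.
  destruct (Xfacts σ 105) as [H2 H2']; auto. repeat constructor.
  destruct (Xfacts σ 125) as [H3 H3']; auto. repeat constructor.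
  assert (Hc1 := c1_bnd). assert (Hc2 := c2_bnd). assert (HQ := Q0_pos).
  unfold Rdiv. rewrite Rabs_mult, Rabs_Ropp, (Rabs_pos_eq Q0) by nra.
  assert (HE : Rabs (- (75 / 8) * / σ ^ 85 + 95 / 8 * c1 * / σ ^ 105 - 115 / 8 * c2 * / σ ^ 125) <= 36 * / σ ^ 8).
  { apply Rabs_le. split; nra. }
  nra.
Qed.

Lemma Ms_bnd σ : 1 <= σ -> 0 <= Ms σ <= 36 * Q0 * / σ ^ 8.
Proof.
  intros Hs. unfold Ms.
  destruct (Xfacts σ 85) as [H1 H1']; auto. repeat constructor.
  destruct (Xfacts σ 105) as [H2 H2']; auto. repeat constructor.
  destruct (Xfacts σ 125) as [H3 H3']; auto. repeat constructor.
  assert (Hc1 := c1_bnd). assert (Hc2 := c2_bnd). assert (HQ := Q0_pos).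
  unfold Rdiv.
  assert (0 <= 75 / 8 * / σ ^ 85 + 95 / 8 * c1 * / σ ^ 105 + 115 / 8 * c2 * / σ ^ 125 <= 36 * / σ ^ 8) by (split; nra).
  split; nra.
Qed.

Lemma hps_ms σ : 0 < σ -> Rabs (hps σ) <= ms σ.
Proof.
  intros Hs. unfold hps, ms.
  assert (H1 := Xpos σ 93 Hs). assert (H2 := Xpos σ 113 Hs). assert (H3 := Xpos σ 133 Hs).
  assert (Hc1 := c1_bnd). assert (Hc2 := c2_bnd). assert (HQ := Q0_pos).
  unfold Rdiv. rewrite Rabs_mult, Rabs_Ropp, (Rabs_pos_eq Q0) by nra.
  apply Rmult_le_compat_l. lra. apply Rabs_le. split; nra.
Qed.

Lemma A1_bnd t : 1 <= t -> Cmod (A1 t) <= cb / t.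
Proof.
  intros Ht. assert (Hs := s_ge1 t Ht). assert (H8 := s_pow8 t ltac:(lra)).
  unfold A1. eapply Rle_trans. apply Cmod_le_abs.
  assert (Hg := gs_bnd _ Hs). assert (Hh := hs_bnd _ Hs).
  assert (Hc := cos_abs (Th t)). assert (Hn := sin_abs (Th t)).
  assert (E1 : Rabs (hs (s t) * cos (Th t) + gs (s t) * sin (Th t)) <= Rabs (hs (s t)) + Rabs (gs (s t))).
  { eapply Rle_trans. apply Rabs_triang. rewrite !Rabs_mult.
    generalize (Rabs_pos (hs (s t))) (Rabs_pos (gs (s t))) (Rabs_pos (cos (Th t))) (Rabs_pos (sin (Th t))). nra. }
  assert (E2 : Rabs (gs (s t) * cos (Th t) + - hs (s t) * sin (Th t)) <= Rabs (hs (s t)) + Rabs (gs (s t))).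
  { eapply Rle_trans. apply Rabs_triang. rewrite !Rabs_mult, Rabs_Ropp.
    generalize (Rabs_pos (hs (s t))) (Rabs_pos (gs (s t))) (Rabs_pos (cos (Th t))) (Rabs_pos (sin (Th t))). nra. }
  replace (cb / t) with (cb * / s t ^ 8) by (rewrite H8; reflexivity).
  unfold cb. assert (HQ := Q0_pos). assert (Ha := a_pos).
  assert (0 < / s t ^ 8) by (apply Xpos; lra). nra.
Qed.

Lemma A2_bnd t : 1 <= t -> Cmod (A2 t) <= cb / t.
Proof.
  intros Ht. assert (Hs := s_ge1 t Ht). assert (H8 := s_pow8 t ltac:(lra)).
  unfold A2. eapply Rle_trans. apply Cmod_le_abs.
  assert (Hg := gs_bnd _ Hs). assert (Hh := hs_bnd _ Hs).
  assert (Hc := cos_abs (Th t)). assert (Hn := sin_abs (Th t)).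
  assert (E1 : Rabs (hs (s t) * cos (Th t) + gs (s t) * sin (Th t)) <= Rabs (hs (s t)) + Rabs (gs (s t))).
  { eapply Rle_trans. apply Rabs_triang. rewrite !Rabs_mult.
    generalize (Rabs_pos (hs (s t))) (Rabs_pos (gs (s t))) (Rabs_pos (cos (Th t))) (Rabs_pos (sin (Th t))). nra. }
  assert (E2 : Rabs (- gs (s t) * cos (Th t) + hs (s t) * sin (Th t)) <= Rabs (hs (s t)) + Rabs (gs (s t))).
  { eapply Rle_trans. apply Rabs_triang. rewrite !Rabs_mult, Rabs_Ropp.
    generalize (Rabs_pos (hs (s t))) (Rabs_pos (gs (s t))) (Rabs_pos (cos (Th t))) (Rabs_pos (sin (Th t))). nra. }
  replace (cb / t) with (cb * / s t ^ 8) by (rewrite H8; reflexivity).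
  unfold cb. assert (HQ := Q0_pos). assert (Ha := a_pos).
  assert (0 < / s t ^ 8) by (apply Xpos; lra). nra.
Qed.

Lemma Ms_bnd_t t : 1 <= t -> 0 <= Ms (s t) <= cb / t.
Proof.
  intros Ht. assert (Hs := s_ge1 t Ht). assert (H8 := s_pow8 t ltac:(lra)).
  destruct (Ms_bnd _ Hs) as [H1 H2]. split; auto.
  replace (cb / t) with (cb * / s t ^ 8) by (rewrite H8; reflexivity). unfold cb.
  assert (HQ := Q0_pos). assert (Ha := a_pos). assert (0 < / s t ^ 8) by (apply Xpos; lra). nra.
Qed.

Lemma cb_pos : 0 < cb.
Proof. unfold cb. generalize Q0_pos a_pos. intros. nra. Qed.

Lemma J1_rep y : 1 <= y -> exists R1,
  is_RInt_gen (V:=C_R_NormedModule) k1 (Rbar_locally p_infty) (at_point y) (A1 y - R1)%C /\ Cmod R1 <= Ms (s y).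
Proof.
  intros Hy.
  apply (Gen k1 A1 r1 (fun t => ms (s t)) (fun t => Ms (s t)) y cb); try lra; try apply cb_pos; intros t Ht.
  - apply dA1; lra.
  - apply cont_k1; lra.
  - apply cont_r1; lra.
  - unfold r1. rewrite Cmod_rot1. apply hps_ms. apply s_pos.
  - apply d_Ms; lra.
  - apply cont_ms; lra.
  - apply Ms_bnd_t; lra.
  - apply A1_bnd; lra.
Qed.

Lemma J2_rep y : 1 <= y -> exists R2,
  is_RInt_gen (V:=C_R_NormedModule) k2 (Rbar_locally p_infty) (at_point y) (A2 y - R2)%C /\ Cmod R2 <= Ms (s y).
Proof.
  intros Hy.
  apply (Gen k2 A2 r2 (fun t => ms (s t)) (fun t => Ms (s t)) y cb); try lra; try apply cb_pos; intros t Ht.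
  - apply dA2; lra.
  - apply cont_k2; lra.
  - apply cont_r2; lra.
  - unfold r2. rewrite Cmod_rot2. apply hps_ms. apply s_pos.
  - apply d_Ms; lra.
  - apply cont_ms; lra.
  - apply Ms_bnd_t; lra.
  - apply A2_bnd; lra.
Qed.

Lemma PF_inf : ProperFilter' (Rbar_locally p_infty).
Proof. apply Proper_StrongProper. apply Rbar_locally_filter. Qed.
Lemma PF_pt (y : R) : ProperFilter' (at_point y).
Proof. apply Proper_StrongProper. apply at_point_filter. Qed.

Lemma ifi_val (k : R -> C) y L :
  is_RInt_gen (V:=C_R_NormedModule) k (Rbar_locally p_infty) (at_point y) L -> int_from_infty k y = L.
Proof.
  intros H. unfold int_from_infty.
  apply (@is_RInt_gen_unique C_R_CompleteNormedModule _ _ PF_inf (PF_pt y)). exact H.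
Qed.

Lemma d_ifi (k : R -> C) x L :
  is_RInt_gen (V:=C_R_NormedModule) k (Rbar_locally p_infty) (at_point 1) L ->
  (forall t, 0 < t -> @continuous R_UniformSpace C_R_NormedModule k t) -> 1 < x ->
  is_derive (V:=C_R_NormedModule) (int_from_infty k) x (k x).
Proof.
  intros HL Hk Hx.
  assert (Hex : forall y, 0 < y -> ex_RInt (V:=C_R_CompleteNormedModule) k 1 y).
  { intros y Hy. apply ex_RInt_continuous. intros z Hz. apply Hk.
    destruct Hz as [Hz _]. eapply Rlt_le_trans; [|apply Hz]. apply Rmin_glb_lt; lra. }
  apply (is_derive_ext_loc (fun y => plus L (RInt (V:=C_R_CompleteNormedModule) k 1 y))).
  { generalize (loc_pos x ltac:(lra)). apply filter_imp. intros y Hy. symmetry.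
    apply ifi_val. apply (@is_RInt_gen_Chasles C_R_NormedModule _ _ _ _ k 1).
    exact HL. apply is_RInt_gen_at_point. apply (@RInt_correct C_R_CompleteNormedModule). apply Hex; auto. }
  assert (H : is_derive (K:=R_AbsRing) (V:=C_R_NormedModule) (fun y => plus L (RInt (V:=C_R_CompleteNormedModule) k 1 y)) x (plus zero (k x))).
  { apply (@is_derive_plus R_AbsRing C_R_NormedModule).
    - apply (@is_derive_const R_AbsRing C_R_NormedModule).
    - apply (@is_derive_RInt C_R_NormedModule k _ 1).
      + generalize (loc_pos x ltac:(lra)). apply filter_imp. intros y Hy.
        apply (@RInt_correct C_R_CompleteNormedModule). apply Hex; auto.
      + apply Hk; lra. }
  rewrite plus_zero_l in H. exact H.
Qed.

Lemma cC1 : (RtoC ((-1) ^ 1) / (Ci * RtoC a_const))%C = (0, / a_const).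
Proof.
  assert (Ha := a_pos). unfold Cdiv, Cinv, Cmult, RtoC, Ci; simpl. f_equal; field; lra.
Qed.

Lemma cC2 : (RtoC ((-1) ^ 2) / (Ci * RtoC a_const))%C = (0, - / a_const).
Proof.
  assert (Ha := a_pos). unfold Cdiv, Cinv, Cmult, RtoC, Ci; simpl. f_equal; field; lra.
Qed.

Lemma Cmod_im y : Cmod (0, y) = Rabs y.
Proof.
  replace (0, y) with (Ci * RtoC y)%C. rewrite Cmod_mult, Cmod_Ci, Cmod_R. ring.
  unfold Cmult, Ci, RtoC; simpl. f_equal; ring.
Qed.

Lemma Cmod_rotg u v θ : Cmod (u * cos θ - v * sin θ, - (v * cos θ) - u * sin θ) <= Rabs u + Rabs v.
Proof.
  replace (Cmod (u * cos θ - v * sin θ, - (v * cos θ) - u * sin θ)) with (Cmod (u, v)).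
  apply Cmod_le_abs.
  unfold Cmod; cbn [fst snd]. f_equal.
  replace ((u * cos θ - v * sin θ) ^ 2 + (- (v * cos θ) - u * sin θ) ^ 2) with ((u ^ 2 + v ^ 2) * (sin θ ^ 2 + cos θ ^ 2)) by ring.
  replace (sin θ ^ 2 + cos θ ^ 2) with 1. ring.
  generalize (sin2_cos2 θ). unfold Rsqr. intros H. rewrite <- H. ring.
Qed.

Lemma Cmod_rotg2 u v θ : Cmod (u * cos θ - v * sin θ, v * cos θ + u * sin θ) <= Rabs u + Rabs v.
Proof.
  replace (Cmod (u * cos θ - v * sin θ, v * cos θ + u * sin θ)) with (Cmod (u, v)).
  apply Cmod_le_abs.
  unfold Cmod; cbn [fst snd]. f_equal.
  replace ((u * cos θ - v * sin θ) ^ 2 + (v * cos θ + u * sin θ) ^ 2) with ((u ^ 2 + v ^ 2) * (sin θ ^ 2 + cos θ ^ 2)) by ring.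
  replace (sin θ ^ 2 + cos θ ^ 2) with 1. ring.
  generalize (sin2_cos2 θ). unfold Rsqr. intros H. rewrite <- H. ring.
Qed.

Lemma sc1 θ : cos θ ^ 2 + sin θ ^ 2 = 1.
Proof. generalize (sin2_cos2 θ). unfold Rsqr. intros H. rewrite <- H. ring. Qed.

Lemma w0_bound x : 1 <= x ->
  Cmod (w0 x) <= 2 / a_const * / s x ^ 5 * Rabs (gs (s x)) + 2 / a_const * / s x ^ 5 * Ms (s x).
Proof.
  intros Hx. assert (Hs := s_pos x). assert (Ha := a_pos).
  destruct (J1_rep x Hx) as [R1 [HJ1 HR1]]. destruct (J2_rep x Hx) as [R2 [HJ2 HR2]].
  apply ifi_val in HJ1. apply ifi_val in HJ2.
  unfold w0. fold k1 k2. rewrite HJ1, HJ2, cC1, cC2, G1_eq, G2_eq by lra.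
  unfold A1, A2.
  set (c := cos (Th x)). set (sn := sin (Th x)). set (P := / s x ^ 5).
  set (g := gs (s x)). set (h := hs (s x)).
  destruct R1 as [u1 v1]. destruct R2 as [u2 v2].
  pose (z1 := (0, / a_const) : C). pose (z2 := (0, - / a_const) : C).
  pose (q1 := (P * c, - (P * sn)) : C). pose (q2 := (P * c, P * sn) : C).
  match goal with |- Cmod ?z <= _ => replace z with
    (RtoC (2 / a_const * P * g * (c ^ 2 + sn ^ 2)) +
     - (z1 * q1 * (u2, v2) + z2 * q2 * (u1, v1)))%C end.
  2:{ unfold z1, z2, q1, q2, Cplus, Cminus, Copp, Cmult, RtoC; simpl. f_equal; field; lra. }
  unfold z1, z2, q1, q2. unfold c, sn. rewrite sc1.
  eapply Rle_trans. apply Cmod_triangle. rewrite Cmod_R, Cmod_opp.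
  eapply Rle_trans. apply Rplus_le_compat_l. apply Cmod_triangle.
  rewrite !Cmod_mult, !Cmod_im, Cmod_rot1, Cmod_rot2.
  assert (HP : 0 < P) by (apply Xpos; lra).
  rewrite Rabs_Ropp, !(Rabs_pos_eq (/ a_const)) by (left; apply Rinv_0_lt_compat; lra).
  rewrite (Rabs_pos_eq P) by lra.
  rewrite Rmult_1_r, !Rabs_mult, (Rabs_pos_eq (2 / a_const)) by (left; apply Rdiv_lt_0_compat; lra).
  rewrite (Rabs_pos_eq P) by lra.
  assert (0 < / a_const) by (apply Rinv_0_lt_compat; lra).
  unfold Rdiv. assert (0 < / a_const * P) by nra. assert (/ a_const * P * Cmod (u2, v2) <= / a_const * P * Ms (s x)) by (apply Rmult_le_compat_l; lra). assert (/ a_const * P * Cmod (u1, v1) <= / a_const * P * Ms (s x)) by (apply Rmult_le_compat_l; lra). lra.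
Qed.

Lemma d_zero t : is_derive (fun _ : R => 0) t 0.
Proof. apply (@is_derive_const R_AbsRing R_NormedModule). Qed.

Definition Pf (t : R) : R := / s t ^ 5.
Definition dPf (t : R) : R := - (5/8) / s t ^ 13.
Definition dth (t : R) : R := a_const / 2 * s t ^ 2.

Lemma d_P t : 0 < t -> is_derive Pf t (dPf t).
Proof.
  intros Ht. assert (Hs := s_pos t). unfold Pf, dPf.
  replace (- (5/8) / s t ^ 13) with ((- 5 / s t ^ 6) / (8 * s t ^ 7)) by (field; lra).
  apply (is_derive_cmp (fun x => / x ^ 5)); auto. auto_derive. nz. field. lra.
Qed.

Lemma d_mP t : 0 < t -> is_derive (fun t => - Pf t) t (- dPf t).
Proof.
  intros Ht. apply (is_derive_ext (fun t => opp (Pf t))). intros; reflexivity.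
  apply (is_derive_opp (K:=R_AbsRing) (V:=R_NormedModule)). apply d_P; auto.
Qed.

Definition G1d (t : R) : C := (dPf t * cos (Th t) - Pf t * dth t * sin (Th t), - (Pf t * dth t * cos (Th t)) - dPf t * sin (Th t)).
Definition G2d (t : R) : C := (dPf t * cos (Th t) - Pf t * dth t * sin (Th t), Pf t * dth t * cos (Th t) + dPf t * sin (Th t)).

Lemma dG1 t : 0 < t -> is_derive (V:=C_R_NormedModule) G1 t (G1d t).
Proof.
  intros Ht.
  apply (is_derive_ext_loc (fun t => (Pf t * cos (Th t) + (fun _ => 0) t * sin (Th t),
                                       (fun _ => 0) t * cos (Th t) + (- Pf t) * sin (Th t)) : C)).
  { generalize (loc_pos t Ht). apply filter_imp. intros y Hy. symmetry. rewrite G1_eq by auto. reflexivity. }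
  replace (G1d t) with (((dPf t + 0 * dth t) * cos (Th t) + (0 - Pf t * dth t) * sin (Th t)),
                        ((0 + - Pf t * dth t) * cos (Th t) + (- dPf t - 0 * dth t) * sin (Th t))).
  2:{ unfold G1d. f_equal; ring. }
  apply is_derive_pairC.
  - apply (d_cs Pf (fun _ => 0) Th); [apply d_P|apply d_zero|apply d_ph]; auto.
  - apply (d_cs (fun _ => 0) (fun t => - Pf t) Th); [apply d_zero|apply d_mP|apply d_ph]; auto.
Qed.

Lemma dG2 t : 0 < t -> is_derive (V:=C_R_NormedModule) G2 t (G2d t).
Proof.
  intros Ht.
  apply (is_derive_ext_loc (fun t => (Pf t * cos (Th t) + (fun _ => 0) t * sin (Th t),
                                       (fun _ => 0) t * cos (Th t) + Pf t * sin (Th t)) : C)).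
  { generalize (loc_pos t Ht). apply filter_imp. intros y Hy. symmetry. rewrite G2_eq by auto. reflexivity. }
  replace (G2d t) with (((dPf t + 0 * dth t) * cos (Th t) + (0 - Pf t * dth t) * sin (Th t)),
                        ((0 + Pf t * dth t) * cos (Th t) + (dPf t - 0 * dth t) * sin (Th t))).
  2:{ unfold G2d. f_equal; ring. }
  apply is_derive_pairC.
  - apply (d_cs Pf (fun _ => 0) Th); [apply d_P|apply d_zero|apply d_ph]; auto.
  - apply (d_cs (fun _ => 0) Pf Th); [apply d_zero|apply d_P|apply d_ph]; auto.
Qed.

Lemma dw_bound x : 11/2 <= x -> exists dw, is_derive (V:=C_R_NormedModule) w0 x dw /\
  Cmod dw <= 2 / a_const * (Rabs (dPf x) * Rabs (gs (s x)) + Rabs (Pf x * dth x) * Rabs (hs (s x)))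
             + 2 / a_const * (Rabs (dPf x) + Rabs (Pf x * dth x)) * Ms (s x).
Proof.
  intros Hx. assert (Hx1 : 1 <= x) by lra. assert (Hs := s_pos x). assert (Ha := a_pos).
  destruct (J1_rep x Hx1) as [R1 [HJ1 HR1]]. destruct (J2_rep x Hx1) as [R2 [HJ2 HR2]].
  destruct (J1_rep 1 ltac:(lra)) as [L1 [HL1 _]]. destruct (J2_rep 1 ltac:(lra)) as [L2 [HL2 _]].
  apply ifi_val in HJ1. apply ifi_val in HJ2.
  set (C1 := (RtoC ((-1) ^ 1) / (Ci * RtoC a_const))%C).
  set (C2 := (RtoC ((-1) ^ 2) / (Ci * RtoC a_const))%C).
  exists (((zero * G1 x + C1 * G1d x) * int_from_infty k2 x + (C1 * G1 x) * k2 x)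
        + ((zero * G2 x + C2 * G2d x) * int_from_infty k1 x + (C2 * G2 x) * k1 x))%C.
  split.
  - unfold w0. fold k1 k2. fold C1 C2.
    apply (@is_derive_plus R_AbsRing C_R_NormedModule (fun y => C1 * G1 y * int_from_infty k2 y)%C
              (fun y => C2 * G2 y * int_from_infty k1 y)%C).
    + apply (is_derive_Cmult (fun y => C1 * G1 y)%C).
      * apply (is_derive_Cmult (fun _ => C1)). apply (@is_derive_const R_AbsRing C_R_NormedModule). apply dG1; lra.
      * apply (d_ifi k2 x _ HL2). intros; apply cont_k2; auto. lra.
    + apply (is_derive_Cmult (fun y => C2 * G2 y)%C).
      * apply (is_derive_Cmult (fun _ => C2)). apply (@is_derive_const R_AbsRing C_R_NormedModule). apply dG2; lra.
      * apply (d_ifi k1 x _ HL1). intros; apply cont_k1; auto. lra.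
  - rewrite HJ1, HJ2. unfold C1, C2. rewrite cC1, cC2, G1_eq, G2_eq, k1_eq, k2_eq by lra.
    unfold A1, A2, G1d, G2d.
    set (c := cos (Th x)). set (sn := sin (Th x)). set (P := Pf x). set (dP := dPf x). set (dt := dth x).
    set (g := gs (s x)). set (h := hs (s x)).
    assert (HF : Fs (s x) = g * dt). { unfold g, dt, dth. rewrite gs_Fs; auto. }
    rewrite HF.
    assert (HP : Pf x = / s x ^ 5) by reflexivity. rewrite <- HP. fold P.
    destruct R1 as [u1 v1]. destruct R2 as [u2 v2].
    pose (z1 := (0, / a_const) : C). pose (z2 := (0, - / a_const) : C).
    pose (q1 := (dP * c - P * dt * sn, - (P * dt * c) - dP * sn) : C).
    pose (q2 := (dP * c - P * dt * sn, P * dt * c + dP * sn) : C).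
    match goal with |- Cmod ?z <= _ => replace z with
      (RtoC (2 / a_const * (dP * g + P * dt * h) * (c ^ 2 + sn ^ 2)) +
       - (z1 * q1 * (u2, v2) + z2 * q2 * (u1, v1)))%C end.
    2:{ unfold z1, z2, q1, q2, Cplus, Cminus, Copp, Cmult, RtoC, zero; simpl. f_equal; field; lra. }
    unfold z1, z2, q1, q2. unfold c, sn. rewrite sc1.
    eapply Rle_trans. apply Cmod_triangle. rewrite Cmod_R, Cmod_opp.
    eapply Rle_trans. apply Rplus_le_compat_l. apply Cmod_triangle.
    rewrite !Cmod_mult, !Cmod_im.
    assert (Hq1 := Cmod_rotg dP (P * dt) (Th x)).
    assert (Hq2 := Cmod_rotg2 dP (P * dt) (Th x)).
    rewrite Rabs_Ropp, !(Rabs_pos_eq (/ a_const)) by (left; apply Rinv_0_lt_compat; lra).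
    rewrite Rmult_1_r, Rabs_mult, (Rabs_pos_eq (2 / a_const)) by (left; apply Rdiv_lt_0_compat; lra).
    assert (Hai : 0 < / a_const) by (apply Rinv_0_lt_compat; lra).
    assert (E1 : Rabs (dP * g + P * dt * h) <= Rabs dP * Rabs g + Rabs (P * dt) * Rabs h).
    { eapply Rle_trans. apply Rabs_triang. rewrite !Rabs_mult. lra. }
    set (Q1 := Cmod (dP * cos (Th x) - P * dt * sin (Th x), - (P * dt * cos (Th x)) - dP * sin (Th x))) in *.
    set (Q2 := Cmod (dP * cos (Th x) - P * dt * sin (Th x), P * dt * cos (Th x) + dP * sin (Th x))) in *.
    assert (0 <= Q1) by apply Cmod_ge_0. assert (0 <= Q2) by apply Cmod_ge_0.
    assert (0 <= Cmod (u1, v1)) by apply Cmod_ge_0. assert (0 <= Cmod (u2, v2)) by apply Cmod_ge_0.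
    assert (/ a_const * Q1 * Cmod (u2, v2) <= / a_const * (Rabs dP + Rabs (P * dt)) * Ms (s x)).
    { apply Rmult_le_compat; try nra. }
    assert (/ a_const * Q2 * Cmod (u1, v1) <= / a_const * (Rabs dP + Rabs (P * dt)) * Ms (s x)).
    { apply Rmult_le_compat; try nra. }
    assert (2 / a_const * Rabs (dP * g + P * dt * h) <= 2 / a_const * (Rabs dP * Rabs g + Rabs (P * dt) * Rabs h)).
    { apply Rmult_le_compat_l. unfold Rdiv; nra. auto. }
    unfold Rdiv in *. lra.
Qed.
Lemma num1 v al c1 Bg BM : 0 < v <= 11873/100000 -> 0 < al <= 4519/10000 -> 0 < c1 <= 556/100000 ->
  Rabs Bg <= 1 + c2 * v ^ 4 -> 0 <= BM <= 75/8 + 95/8 * c1 * v ^ 2 + 115/8 * c2 * v ^ 4 ->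
  Q0 * Rabs Bg + al * Q0 * v * BM <= 15/2.
Proof.
  intros Hv Hal Hc Hg HM. unfold Q0, c2 in *.
  assert (Hv2 : v ^ 2 <= 141/10000) by nra.
  assert (Hv4 : v ^ 4 <= 2/10000) by nra.
  assert (0 <= v ^ 2) by nra. assert (0 <= v ^ 4) by nra.
  assert (c1 * v ^ 2 <= 556/100000 * (141/10000)) by (apply Rmult_le_compat; lra).
  assert (HB : BM <= 9377/1000) by nra.
  assert (al * v <= 4519/10000 * (11873/100000)) by (apply Rmult_le_compat; lra).
  assert (al * v * BM <= 4519/10000 * (11873/100000) * (9377/1000)) by (apply Rmult_le_compat; nra).
  nra.
Qed.

Lemma num2 v al c1 Bg Bh BM : 0 < v <= 11873/100000 -> 0 < al <= 4519/10000 -> 0 < c1 <= 556/100000 ->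
  Rabs Bg <= 1 + c2 * v ^ 4 -> Rabs Bh <= 75/8 + 95/8 * c1 * v ^ 2 + 115/8 * c2 * v ^ 4 ->
  0 <= BM <= 75/8 + 95/8 * c1 * v ^ 2 + 115/8 * c2 * v ^ 4 ->
  Q0 * v * (5/8 * Rabs Bg + Rabs Bh + al * (5/8) * v * BM + BM) <= 885/100.
Proof.
  intros Hv Hal Hc Hg Hh HM. unfold Q0, c2 in *.
  assert (Hv2 : v ^ 2 <= 14097/1000000) by nra.
  assert (Hv4 : v ^ 4 <= 1988/10000000) by nra.
  assert (0 <= v ^ 2) by nra. assert (0 <= v ^ 4) by nra.
  assert (c1 * v ^ 2 <= 556/100000 * (14097/1000000)) by (apply Rmult_le_compat; lra).
  set (UB := 75/8 + 95/8 * (556/100000 * (14097/1000000)) + 115/8 * (30625/2161176) * (1988/10000000)).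
  assert (HB : BM <= UB) by (unfold UB; nra).
  assert (HBh : Rabs Bh <= UB) by (unfold UB; nra).
  assert (HBg : Rabs Bg <= 1 + 30625/2161176 * (1988/10000000)) by nra.
  assert (al * v <= 4519/10000 * (11873/100000)) by (apply Rmult_le_compat; lra).
  assert (al * v * BM <= 4519/10000 * (11873/100000) * UB) by (apply Rmult_le_compat; unfold UB in *; nra).
  assert (Hin : 5/8 * Rabs Bg + Rabs Bh + al * (5/8) * v * BM + BM <=
     5/8 * (1 + 30625/2161176 * (1988/10000000)) + UB + 5/8 * (4519/10000 * (11873/100000) * UB) + UB) by nra.
  assert (0 <= 5/8 * Rabs Bg + Rabs Bh + al * (5/8) * v * BM + BM).
  { assert (0 <= al * v * BM) by (apply Rmult_le_pos; nra). generalize (Rabs_pos Bg) (Rabs_pos Bh). lra. }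
  apply Rle_trans with (4412401 / 1179648 * (11873/100000) * (5/8 * (1 + 30625/2161176 * (1988/10000000)) + UB + 5/8 * (4519/10000 * (11873/100000) * UB) + UB)).
  - rewrite !Rmult_assoc. apply Rmult_le_compat_l. lra.
    apply Rmult_le_compat; lra.
  - unfold UB. lra.
Qed.

Lemma s_lb x : 11/2 <= x -> 12375/10000 <= s x.
Proof.
  intros Hx. assert (Hs := s_pos x). assert (H8 := s_pow8 x ltac:(lra)).
  destruct (Rlt_or_le (s x) (12375/10000)) as [H|H]; auto.
  exfalso. assert (s x ^ 8 <= (12375/10000) ^ 8) by (apply pow_incr; lra). lra.
Qed.

Lemma v_bnd x : 11/2 <= x -> 0 < / s x ^ 10 <= 11873/100000.
Proof.
  intros Hx. assert (Hs := s_lb x Hx). assert (H8 := s_pow8 x ltac:(lra)).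
  assert (Hp : 0 < s x ^ 10) by (apply pow_lt; lra).
  split. apply Rinv_0_lt_compat; auto.
  assert (H10 : s x ^ 10 = s x ^ 8 * s x ^ 2) by ring.
  assert (s x ^ 2 >= (12375/10000) ^ 2) by nra.
  assert (Hge : 100000 / 11873 <= s x ^ 10) by nra.
  apply Rmult_le_reg_l with (s x ^ 10); auto. rewrite Rinv_r by lra. nra.
Qed.

Lemma al_bnd : 0 < 2 / a_const <= 4519/10000.
Proof.
  assert (Ha := a_pos). split. apply Rdiv_lt_0_compat; lra.
  set (q := Rpower 24 (1/4)).
  assert (Hq : 0 < q) by (unfold q, Rpower; apply exp_pos).
  assert (Hq4 : q ^ 4 = 24).
  { unfold q. rewrite <- Rpower_pow by (unfold Rpower; apply exp_pos). rewrite Rpower_mult.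
    replace (1/4 * INR 4) with 1 by (simpl; field). apply Rpower_1. lra. }
  assert (Haq : a_const = 2 * q) by (unfold a_const, b_const, q; field).
  assert (Hql : 22129/10000 <= q).
  { destruct (Rlt_or_le q (22129/10000)) as [H|H]; auto. exfalso.
    assert (q ^ 4 <= (22129/10000) ^ 4) by (apply pow_incr; lra). lra. }
  apply Rmult_le_reg_l with a_const; auto. unfold Rdiv. field_simplify; [|lra]. lra.
Qed.

Lemma c1_bnd2 : c1 <= 556/100000.
Proof.
  unfold c1. assert (H := sqrt6_pos). assert (H2 : 2449/1000 <= sqrt 6).
  { rewrite <- (sqrt_square (2449/1000)) by lra. apply sqrt_le_1_alt. lra. }
  apply Rmult_le_reg_r with (90049 * sqrt 6). nra. unfold Rdiv. rewrite Rmult_assoc, Rinv_l by nra. nra.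
Qed.

Lemma gs_form σ : 0 < σ -> gs σ = - (Q0 * a_const / 2) * / σ ^ 75 * (1 - c1 * (/ σ ^ 10) ^ 2 + c2 * (/ σ ^ 10) ^ 4).
Proof. intros. unfold gs. field. lra. Qed.
Lemma hs_form σ : 0 < σ -> hs σ = - Q0 * / σ ^ 85 * (- (75/8) + 95/8 * c1 * (/ σ ^ 10) ^ 2 - 115/8 * c2 * (/ σ ^ 10) ^ 4).
Proof. intros. unfold hs. field. lra. Qed.
Lemma Ms_form σ : 0 < σ -> Ms σ = Q0 * / σ ^ 85 * (75/8 + 95/8 * c1 * (/ σ ^ 10) ^ 2 + 115/8 * c2 * (/ σ ^ 10) ^ 4).
Proof. intros. unfold Ms. field. lra. Qed.

Theorem lemma3p1 :
  forall x : R, 11/2 <= x ->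
    Cmod (w0 x) <= 15/2 * Rpower x (-10) /\
    exists dw : C, is_derive (V := C_R_NormedModule) w0 x dw /\
                   Cmod dw <= 885/100 * Rpower x (-39/4).
Proof.
  intros x Hx.
  assert (Hxp : 0 < x) by lra. assert (Hs := s_pos x).
  set (σ := s x) in *.
  set (v := / σ ^ 10).
  assert (Hv : 0 < v <= 11873/100000) by (apply v_bnd; auto).
  assert (Hal := al_bnd). assert (Hc1 := c1_bnd). assert (Hc1' := c1_bnd2). assert (Hc2 := c2_bnd).
  assert (HQ := Q0_pos). assert (Ha := a_pos).
  set (Bg := 1 - c1 * v ^ 2 + c2 * v ^ 4).
  set (Bh := - (75/8) + 95/8 * c1 * v ^ 2 - 115/8 * c2 * v ^ 4).
  set (BM := 75/8 + 95/8 * c1 * v ^ 2 + 115/8 * c2 * v ^ 4).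
  assert (Hv2 : 0 <= v ^ 2 <= 1) by (split; nra).
  assert (Hv4 : 0 <= v ^ 4) by nra.
  assert (HBg : Rabs Bg <= 1 + c2 * v ^ 4).
  { unfold Bg. assert (c1 * v ^ 2 <= 1) by nra. assert (0 <= c1 * v ^ 2) by nra. apply Rabs_le. split; nra. }
  assert (HBh : Rabs Bh <= 75/8 + 95/8 * c1 * v ^ 2 + 115/8 * c2 * v ^ 4).
  { unfold Bh. assert (0 <= c1 * v ^ 2) by nra. assert (0 <= c2 * v ^ 4) by nra. apply Rabs_le. split; nra. }
  assert (HBM : 0 <= BM <= 75/8 + 95/8 * c1 * v ^ 2 + 115/8 * c2 * v ^ 4).
  { unfold BM. assert (0 <= c1 * v ^ 2) by nra. assert (0 <= c2 * v ^ 4) by nra. split; nra. }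
  assert (Hgs : Rabs (gs σ) = Q0 * a_const / 2 * / σ ^ 75 * Rabs Bg).
  { rewrite gs_form by auto. fold v Bg. rewrite !Rabs_mult, Rabs_Ropp.
    rewrite (Rabs_pos_eq (Q0 * a_const / 2)) by (unfold Rdiv; nra).
    rewrite (Rabs_pos_eq (/ σ ^ 75)) by (left; apply Xpos; auto). reflexivity. }
  assert (Hhs : Rabs (hs σ) = Q0 * / σ ^ 85 * Rabs Bh).
  { rewrite hs_form by auto. fold v Bh. rewrite !Rabs_mult, Rabs_Ropp.
    rewrite (Rabs_pos_eq Q0) by lra.
    rewrite (Rabs_pos_eq (/ σ ^ 85)) by (left; apply Xpos; auto). reflexivity. }
  assert (HMs : Ms σ = Q0 * / σ ^ 85 * BM).
  { rewrite Ms_form by auto. reflexivity. }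
  split.
  - eapply Rle_trans. apply w0_bound; lra. fold σ.
    replace (Rpower x (-10)) with (/ σ ^ 80).
    2:{ replace (-10) with (IZR (Zneg 80) / 8) by lra. rewrite rp8 by auto. reflexivity. }
    rewrite Hgs, HMs.
    assert (Hal2 := num1 v (2 / a_const) c1 Bg BM Hv Hal (conj (proj1 Hc1) Hc1') HBg HBM).
    replace (2 / a_const * / σ ^ 5 * (Q0 * a_const / 2 * / σ ^ 75 * Rabs Bg) +
             2 / a_const * / σ ^ 5 * (Q0 * / σ ^ 85 * BM))
      with (/ σ ^ 80 * (Q0 * Rabs Bg + 2 / a_const * Q0 * v * BM)).
    2:{ unfold v. field. lra. }
    assert (0 < / σ ^ 80) by (apply Xpos; auto).
    rewrite Rmult_comm. apply Rmult_le_compat_r; lra.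
  - destruct (dw_bound x Hx) as [dw [Hd Hdb]]. exists dw. split; auto.
    eapply Rle_trans. apply Hdb. fold σ.
    replace (Rpower x (-39/4)) with (/ σ ^ 78).
    2:{ replace (-39/4) with (IZR (Zneg 78) / 8) by lra. rewrite rp8 by auto. reflexivity. }
    assert (HdP : Rabs (dPf x) = 5/8 * / σ ^ 13).
    { unfold dPf. fold σ. replace (- (5/8) / σ ^ 13) with (- (5/8 * / σ ^ 13)) by (field; lra).
      rewrite Rabs_Ropp. apply Rabs_pos_eq. assert (0 < / σ ^ 13) by (apply Xpos; auto). lra. }
    assert (HPd : Rabs (Pf x * dth x) = a_const / 2 * / σ ^ 3).
    { unfold Pf, dth. fold σ. replace (/ σ ^ 5 * (a_const / 2 * σ ^ 2)) with (a_const / 2 * / σ ^ 3) by (field; lra).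
      apply Rabs_pos_eq. assert (0 < / σ ^ 3) by (apply Xpos; auto). unfold Rdiv. nra. }
    rewrite HdP, HPd, Hgs, Hhs, HMs.
    assert (Hn := num2 v (2 / a_const) c1 Bg Bh BM Hv Hal (conj (proj1 Hc1) Hc1') HBg HBh HBM).
    match goal with |- ?L <= _ => replace L with
      (/ σ ^ 78 * (Q0 * v * (5/8 * Rabs Bg + Rabs Bh + 2 / a_const * (5/8) * v * BM + BM))) end.
    2:{ unfold v. field. lra. }
    assert (0 < / σ ^ 78) by (apply Xpos; auto).
    rewrite Rmult_comm. apply Rmult_le_compat_r; lra.
Qed.
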